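(* Let $\mathcal{W}$ be a weakly exact structure on an additive category $\mathcal{A}$. For objects $A,C$ let $\mathbb{W}(C,A)=\mathrm{Ext}^1_{\mathcal{W}}(C,A)$ be the class of equivalence classes $\overline{(i,d)}$ of short exact sequences $A\xrightarrow{i}B\xrightarrow{d}C$ in $\mathcal{W}$. For $a:A\to A'$ define $\mathbb{W}(C,a)(E)=aE$ as the pushout of $E$ along $a$, for $c:C'\to C$ define $\mathbb{W}(c,A)(E)=Ec$ as the pullback of $E$ along $c$, and define the sum (Baer sum) $E_1+E_2=\nabla_A(E_1\oplus E_2)\Delta_C$, with $\nabla_A:A\oplus A\to A$ the codiagonal and $\Delta_C:C\to C\oplus C$ the diagonal. Then these operations are well defined and make $\mathbb{W}$ an additive bifunctor $\mathcal{A}^{op}\times\mathcal{A}\to\mathrm{Ab}$.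
   Context: Let $\mathcal{A}$ be an additive category. A kernel-cokernel pair (short exact sequence) is a pair of composable morphisms $A\xrightarrow{i}B\xrightarrow{d}C$ with $i$ a kernel of $d$ and $d$ a cokernel of $i$. A weakly exact structure on $\mathcal{A}$ is a class $\mathcal{W}$ of kernel-cokernel pairs, closed under isomorphisms of sequences and under finite direct sums of sequences, such that, calling $i$ an admissible monic (resp. $d$ an admissible epic) if $(i,d)\in\mathcal{W}$ for some $d$ (resp. some $i$): (E0) $1_A$ is an admissible monic for every object $A$; (E0)$^{op}$ $1_A$ is an admissible epic for every object $A$; (E2) for every admissible monic $i:A\to B$ and every morphism $t:A\to C$ the pushout of $i$ along $t$ exists and the resulting morphism $C\to S$ is an admissible monic; (E2)$^{op}$ for every admissible epic $h:A\to C$ and every morphism $t:B\to C$ the pullback of $h$ along $t$ exists and the resulting morphism $P\to B$ is an admissible epic. Two short exact sequences $A\to B\to C$ and $A\to B'\to C$ are equivalent if there is an isomorphism $B\to B'$ making the diagram with identities on $A$ and $C$ commute. The pushout $aE$ of $E=(A\xrightarrow{i}B\xrightarrow{d}C)$ along $a:A\to A'$ is the sequence $A'\to B\sqcup_A A'\to C$ obtained from the pushout of $i$ and $a$; the pullback $Ec$ is defined dually. *)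

(* Defs.v *)
Set Implicit Arguments.
Unset Strict Implicit.

Record AddCat := {
  Ob : Type;
  Hom : Ob -> Ob -> Type;
  comp : forall A B C : Ob, Hom B C -> Hom A B -> Hom A C;
  idm : forall A : Ob, Hom A A;
  comp_assoc : forall (A B C D : Ob) (h : Hom C D) (g : Hom B C) (f : Hom A B),
      comp h (comp g f) = comp (comp h g) f;
  comp_id_l : forall (A B : Ob) (f : Hom A B), comp (idm B) f = f;
  comp_id_r : forall (A B : Ob) (f : Hom A B), comp f (idm A) = f;
  hzero : forall A B : Ob, Hom A B;
  hadd : forall A B : Ob, Hom A B -> Hom A B -> Hom A B;
  hopp : forall A B : Ob, Hom A B -> Hom A B;
  hadd_assoc : forall A B (f g h : Hom A B), hadd f (hadd g h) = hadd (hadd f g) h;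
  hadd_comm : forall A B (f g : Hom A B), hadd f g = hadd g f;
  hadd_0 : forall A B (f : Hom A B), hadd f (hzero A B) = f;
  hadd_opp : forall A B (f : Hom A B), hadd f (hopp f) = hzero A B;
  comp_addl : forall A B C (g1 g2 : Hom B C) (f : Hom A B),
      comp (hadd g1 g2) f = hadd (comp g1 f) (comp g2 f);
  comp_addr : forall A B C (g : Hom B C) (f1 f2 : Hom A B),
      comp g (hadd f1 f2) = hadd (comp g f1) (comp g f2);
  zob : Ob;
  zob_trivial : forall f g : Hom zob zob, f = g;
  bp : Ob -> Ob -> Ob;
  bi1 : forall A B, Hom A (bp A B);
  bi2 : forall A B, Hom B (bp A B);
  bp1 : forall A B, Hom (bp A B) A;
  bp2 : forall A B, Hom (bp A B) B;
  bp1_bi1 : forall A B, comp (bp1 A B) (bi1 A B) = idm A;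
  bp2_bi2 : forall A B, comp (bp2 A B) (bi2 A B) = idm B;
  bp_sum : forall A B, hadd (comp (bi1 A B) (bp1 A B)) (comp (bi2 A B) (bp2 A B))
                       = idm (bp A B)
}.

Arguments Hom {X} : rename.
Arguments comp {X A B C} : rename.
Arguments idm {X} : rename.
Arguments hzero {X} : rename.
Arguments hadd {X A B} : rename.
Arguments hopp {X A B} : rename.
Arguments zob {X} : rename.
Arguments bp {X} : rename.
Arguments bi1 {X} : rename.
Arguments bi2 {X} : rename.
Arguments bp1 {X} : rename.
Arguments bp2 {X} : rename.

Section Defs.
Variable X : AddCat.
Local Notation Ob := (Ob X).

Definition iso (A B : Ob) (f : Hom A B) : Prop :=
  exists g : Hom B A, comp g f = idm A /\ comp f g = idm B.

Definition hsum (A1 A2 B1 B2 : Ob) (f1 : Hom A1 B1) (f2 : Hom A2 B2)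
  : Hom (bp A1 A2) (bp B1 B2) :=
  hadd (comp (bi1 B1 B2) (comp f1 (bp1 A1 A2)))
       (comp (bi2 B1 B2) (comp f2 (bp2 A1 A2))).

Definition diag (C : Ob) : Hom C (bp C C) := hadd (bi1 C C) (bi2 C C).
Definition codiag (A : Ob) : Hom (bp A A) A := hadd (bp1 A A) (bp2 A A).

Definition is_kernel (A B C : Ob) (i : Hom A B) (d : Hom B C) : Prop :=
  comp d i = hzero A C /\
  forall (Y : Ob) (f : Hom Y B), comp d f = hzero Y C ->
    exists g : Hom Y A, comp i g = f /\ forall g', comp i g' = f -> g' = g.

Definition is_cokernel (A B C : Ob) (i : Hom A B) (d : Hom B C) : Prop :=
  comp d i = hzero A C /\
  forall (Y : Ob) (f : Hom B Y), comp f i = hzero A Y ->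
    exists g : Hom C Y, comp g d = f /\ forall g', comp g' d = f -> g' = g.

Definition kc_pair (A B C : Ob) (i : Hom A B) (d : Hom B C) : Prop :=
  is_kernel i d /\ is_cokernel i d.

Definition is_pushout (A B C S : Ob) (f : Hom A B) (g : Hom A C)
  (u : Hom B S) (v : Hom C S) : Prop :=
  comp u f = comp v g /\
  forall (Y : Ob) (x : Hom B Y) (y : Hom C Y), comp x f = comp y g ->
    exists h : Hom S Y, (comp h u = x /\ comp h v = y) /\
      forall h', comp h' u = x /\ comp h' v = y -> h' = h.

Definition is_pullback (A B C P : Ob) (f : Hom B A) (g : Hom C A)
  (u : Hom P B) (v : Hom P C) : Prop :=
  comp f u = comp g v /\
  forall (Y : Ob) (x : Hom Y B) (y : Hom Y C), comp f x = comp g y ->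
    exists h : Hom Y P, (comp u h = x /\ comp v h = y) /\
      forall h', comp u h' = x /\ comp v h' = y -> h' = h.

Definition Wclass := forall A B C : Ob, Hom A B -> Hom B C -> Prop.

Definition adm_monic (W : Wclass) (A B : Ob) (i : Hom A B) : Prop :=
  exists (C : Ob) (d : Hom B C), W A B C i d.
Definition adm_epic (W : Wclass) (B C : Ob) (d : Hom B C) : Prop :=
  exists (A : Ob) (i : Hom A B), W A B C i d.

Definition weakly_exact (W : Wclass) : Prop :=
  (forall A B C (i : Hom A B) (d : Hom B C), W A B C i d -> kc_pair i d) /\
  (forall A B C A' B' C' (i : Hom A B) (d : Hom B C) (i' : Hom A' B') (d' : Hom B' C')
          (al : Hom A A') (be : Hom B B') (ga : Hom C C'),
      W A B C i d -> iso al -> iso be -> iso ga ->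
      comp be i = comp i' al -> comp ga d = comp d' be -> W A' B' C' i' d') /\
  (W zob zob zob (idm zob) (idm zob)) /\
  (forall A1 B1 C1 A2 B2 C2 (i1 : Hom A1 B1) (d1 : Hom B1 C1)
          (i2 : Hom A2 B2) (d2 : Hom B2 C2),
      W A1 B1 C1 i1 d1 -> W A2 B2 C2 i2 d2 ->
      W (bp A1 A2) (bp B1 B2) (bp C1 C2) (hsum i1 i2) (hsum d1 d2)) /\
  (forall A : Ob, adm_monic W (idm A)) /\
  (forall A : Ob, adm_epic W (idm A)) /\
  (forall A B C (i : Hom A B) (t : Hom A C), adm_monic W i ->
      exists (S : Ob) (u : Hom B S) (v : Hom C S),
        is_pushout i t u v /\ adm_monic W v) /\
  (forall A B C (h : Hom A C) (t : Hom B C), adm_epic W h ->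
      exists (P : Ob) (u : Hom P A) (v : Hom P B),
        is_pullback h t u v /\ adm_epic W v).

Record ses (W : Wclass) (A C : Ob) := Ses {
  smid : Ob;
  si : Hom A smid;
  sd : Hom smid C;
  sW : W A smid C si sd
}.
Arguments Ses {W A C} smid si sd sW.

Definition ses_equiv (W : Wclass) (A C : Ob) (E E' : ses W A C) : Prop :=
  exists phi : Hom (smid E) (smid E'),
    iso phi /\ comp phi (si E) = si E' /\ comp (sd E') phi = sd E.

(* Ext^1_W(C, A): the equivalence classes, represented as predicates *)
Definition Ext (W : Wclass) (C A : Ob) : Type :=
  { P : ses W A C -> Prop | exists E : ses W A C, P = ses_equiv E }.

Definition cls (W : Wclass) (A C : Ob) (E : ses W A C) : Ext W C A :=
  exist _ (ses_equiv E) (ex_intro _ E eq_refl).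

(* (i', d') with middle object S is "the" pushout aE of E = (i, d) along a,
   obtained from the pushout (S, t, i') of i and a: d' is induced by d and 0. *)
Definition pushout_seq (A B C A' S : Ob) (i : Hom A B) (d : Hom B C) (a : Hom A A')
  (t : Hom B S) (i' : Hom A' S) (d' : Hom S C) : Prop :=
  is_pushout i a t i' /\ comp d' t = d /\ comp d' i' = hzero A' C.

(* (i', d') with middle object P is "the" pullback Ec of E = (i, d) along c,
   obtained from the pullback (P, s, d') of d and c: i' is induced by i and 0. *)
Definition pullback_seq (A B C C' P : Ob) (i : Hom A B) (d : Hom B C) (c : Hom C' C)
  (s : Hom P B) (d' : Hom P C') (i' : Hom A P) : Prop :=
  is_pullback d c s d' /\ comp s i' = i /\ comp d' i' = hzero A C'.

Definition is_abgroup (T : Type) (add : T -> T -> T) (z : T) (opp : T -> T) : Prop :=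
  (forall x y w, add x (add y w) = add (add x y) w) /\
  (forall x y, add x y = add y x) /\
  (forall x, add x z = x) /\
  (forall x, add x (opp x) = z).

End Defs.

(* Main.v *)
Require Import Defs.
From Stdlib Require Import ClassicalEpsilon FunctionalExtensionality PropExtensionality ProofIrrelevance.

Set Implicit Arguments.
Unset Strict Implicit.
Section Main.
Variable X : AddCat.
Variable W : Wclass X.
Arguments W : clear implicits.
Variable HW : weakly_exact W.

Local Notation Ob := (Ob X).

Lemma hadd_0l (A B : Ob) (f : Hom A B) : hadd (hzero A B) f = f.
Proof. rewrite hadd_comm; apply hadd_0. Qed.

Lemma hadd_oppl (A B : Ob) (f : Hom A B) : hadd (hopp f) f = hzero A B.
Proof. rewrite hadd_comm; apply hadd_opp. Qed.

Lemma hadd_cancel (A B : Ob) (f g h : Hom A B) : hadd f g = hadd f h -> g = h.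
Proof.
  intro H. rewrite <- (hadd_0l g), <- (hadd_0l h), <- (hadd_oppl f), <- !hadd_assoc, H.
  reflexivity.
Qed.

Lemma idem_zero (A B : Ob) (x : Hom A B) : hadd x x = x -> x = hzero A B.
Proof. intro H. apply (hadd_cancel (f:=x)). rewrite H, hadd_0. reflexivity. Qed.

Lemma comp_0l (A B C : Ob) (f : Hom A B) : comp (hzero B C) f = hzero A C.
Proof. apply idem_zero. rewrite <- comp_addl, hadd_0. reflexivity. Qed.

Lemma comp_0r (A B C : Ob) (g : Hom B C) : comp g (hzero A B) = hzero A C.
Proof. apply idem_zero. rewrite <- comp_addr, hadd_0. reflexivity. Qed.

Lemma comp_oppl (A B C : Ob) (g : Hom B C) (f : Hom A B) :
  comp (hopp g) f = hopp (comp g f).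
Proof.
  apply (hadd_cancel (f:= comp g f)). rewrite <- comp_addl, !hadd_opp, comp_0l. reflexivity.
Qed.

Lemma comp_oppr (A B C : Ob) (g : Hom B C) (f : Hom A B) :
  comp g (hopp f) = hopp (comp g f).
Proof.
  apply (hadd_cancel (f:= comp g f)). rewrite <- comp_addr, !hadd_opp, comp_0r. reflexivity.
Qed.

Lemma sub_zero (A B : Ob) (f g : Hom A B) : hadd f (hopp g) = hzero A B -> f = g.
Proof.
  intro H. rewrite <- (hadd_0 f), <- (hadd_oppl g), hadd_assoc, H, hadd_0l. reflexivity.
Qed.

Lemma bp1_bi2 (A B : Ob) : comp (bp1 A B) (bi2 A B) = hzero B A.
Proof.
  assert (H: comp (bp1 A B) (idm _) = bp1 A B) by apply comp_id_r.
  rewrite <- bp_sum, comp_addr, !comp_assoc, bp1_bi1, comp_id_l in H.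
  assert (H2 : comp (comp (bp1 A B) (bi2 A B)) (bp2 A B) = hzero _ _).
  { apply (hadd_cancel (f := bp1 A B)). rewrite H, hadd_0. reflexivity. }
  rewrite <- (comp_id_r (comp (bp1 A B) (bi2 A B))), <- (bp2_bi2 A B),
     comp_assoc, H2, comp_0l. reflexivity.
Qed.

Lemma bp2_bi1 (A B : Ob) : comp (bp2 A B) (bi1 A B) = hzero A B.
Proof.
  assert (H: comp (bp2 A B) (idm _) = bp2 A B) by apply comp_id_r.
  rewrite <- bp_sum, comp_addr, !comp_assoc, bp2_bi2, comp_id_l in H.
  assert (H2 : comp (comp (bp2 A B) (bi1 A B)) (bp1 A B) = hzero _ _).
  { apply (hadd_cancel (f := bp2 A B)). rewrite hadd_comm, H, hadd_0. reflexivity. }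
  rewrite <- (comp_id_r (comp (bp2 A B) (bi1 A B))), <- (bp1_bi1 A B),
     comp_assoc, H2, comp_0l. reflexivity.
Qed.

Lemma bp_ext_in (Y A B : Ob) (f g : Hom Y (bp A B)) :
  comp (bp1 A B) f = comp (bp1 A B) g -> comp (bp2 A B) f = comp (bp2 A B) g -> f = g.
Proof.
  intros H1 H2. rewrite <- (comp_id_l f), <- (comp_id_l g), <- bp_sum,
    !comp_addl, <- !comp_assoc, H1, H2. reflexivity.
Qed.

Lemma bp_ext_out (Y A B : Ob) (f g : Hom (bp A B) Y) :
  comp f (bi1 A B) = comp g (bi1 A B) -> comp f (bi2 A B) = comp g (bi2 A B) -> f = g.
Proof.
  intros H1 H2. rewrite <- (comp_id_r f), <- (comp_id_r g), <- bp_sum,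
    !comp_addr, !comp_assoc, H1, H2. reflexivity.
Qed.

Section HS.
Variables (A1 A2 B1 B2 : Ob) (f1 : Hom A1 B1) (f2 : Hom A2 B2).
Lemma bp1_hsum : comp (bp1 B1 B2) (hsum f1 f2) = comp f1 (bp1 A1 A2).
Proof.
  unfold hsum. rewrite comp_addr, !comp_assoc, bp1_bi1, bp1_bi2, comp_id_l, !comp_0l, hadd_0.
  reflexivity.
Qed.
Lemma bp2_hsum : comp (bp2 B1 B2) (hsum f1 f2) = comp f2 (bp2 A1 A2).
Proof.
  unfold hsum. rewrite comp_addr, !comp_assoc, bp2_bi2, bp2_bi1, comp_id_l, !comp_0l, hadd_0l.
  reflexivity.
Qed.
Lemma hsum_bi1 : comp (hsum f1 f2) (bi1 A1 A2) = comp (bi1 B1 B2) f1.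
Proof.
  unfold hsum. rewrite comp_addl, <- !comp_assoc, bp1_bi1, bp2_bi1, comp_id_r, !comp_0r, hadd_0.
  reflexivity.
Qed.
Lemma hsum_bi2 : comp (hsum f1 f2) (bi2 A1 A2) = comp (bi2 B1 B2) f2.
Proof.
  unfold hsum. rewrite comp_addl, <- !comp_assoc, bp2_bi2, bp1_bi2, comp_id_r, !comp_0r, hadd_0l.
  reflexivity.
Qed.
End HS.

Lemma bp1_diag (C : Ob) : comp (bp1 C C) (diag C) = idm C.
Proof. unfold diag. rewrite comp_addr, bp1_bi1, bp1_bi2, hadd_0. reflexivity. Qed.
Lemma bp2_diag (C : Ob) : comp (bp2 C C) (diag C) = idm C.
Proof. unfold diag. rewrite comp_addr, bp2_bi2, bp2_bi1, hadd_0l. reflexivity. Qed.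
Lemma codiag_bi1 (C : Ob) : comp (codiag C) (bi1 C C) = idm C.
Proof. unfold codiag. rewrite comp_addl, bp1_bi1, bp2_bi1, hadd_0. reflexivity. Qed.
Lemma codiag_bi2 (C : Ob) : comp (codiag C) (bi2 C C) = idm C.
Proof. unfold codiag. rewrite comp_addl, bp2_bi2, bp1_bi2, hadd_0l. reflexivity. Qed.

Lemma hsum_comp (A1 A2 B1 B2 C1 C2 : Ob) (f : Hom B1 C1) (g : Hom B2 C2)
  (f' : Hom A1 B1) (g' : Hom A2 B2) :
  comp (hsum f g) (hsum f' g') = hsum (comp f f') (comp g g').
Proof.
  apply bp_ext_in.
  - rewrite comp_assoc, !bp1_hsum, <- comp_assoc, bp1_hsum, comp_assoc. reflexivity.
  - rewrite comp_assoc, !bp2_hsum, <- comp_assoc, bp2_hsum, comp_assoc. reflexivity.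
Qed.

Lemma hsum_id (A B : Ob) : hsum (idm A) (idm B) = idm (bp A B).
Proof. unfold hsum. rewrite !comp_id_l. apply bp_sum. Qed.

Lemma diag_nat (C C' : Ob) (c : Hom C' C) : comp (diag C) c = comp (hsum c c) (diag C').
Proof.
  apply bp_ext_in.
  - rewrite !comp_assoc, bp1_diag, bp1_hsum, <- comp_assoc, bp1_diag, comp_id_l, comp_id_r.
    reflexivity.
  - rewrite !comp_assoc, bp2_diag, bp2_hsum, <- comp_assoc, bp2_diag, comp_id_l, comp_id_r.
    reflexivity.
Qed.

Lemma codiag_nat (A A' : Ob) (a : Hom A A') : comp a (codiag A) = comp (codiag A') (hsum a a).
Proof.
  apply bp_ext_out.
  - rewrite <- !comp_assoc, codiag_bi1, hsum_bi1, comp_assoc, codiag_bi1, comp_id_l, comp_id_r.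
    reflexivity.
  - rewrite <- !comp_assoc, codiag_bi2, hsum_bi2, comp_assoc, codiag_bi2, comp_id_l, comp_id_r.
    reflexivity.
Qed.

Lemma sum_via (A A' : Ob) (a b : Hom A A') :
  hadd a b = comp (codiag A') (comp (hsum a b) (diag A)).
Proof.
  unfold diag. rewrite comp_addr, hsum_bi1, hsum_bi2, comp_addr, !comp_assoc,
    codiag_bi1, codiag_bi2, !comp_id_l. reflexivity.
Qed.

Lemma W_kc : forall (A B C : Ob) (i : Hom A B) (d : Hom B C), W A B C i d -> kc_pair i d.
Proof. destruct HW as [H _]; exact H. Qed.
Lemma W_iso : forall A B C A' B' C' (i : Hom A B) (d : Hom B C) (i' : Hom A' B') (d' : Hom B' C')
          (al : Hom A A') (be : Hom B B') (ga : Hom C C'),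
      W A B C i d -> iso al -> iso be -> iso ga ->
      comp be i = comp i' al -> comp ga d = comp d' be -> W A' B' C' i' d'.
Proof. destruct HW as (_ & H & _); exact H. Qed.
Lemma W_sum : forall A1 B1 C1 A2 B2 C2 (i1 : Hom A1 B1) (d1 : Hom B1 C1)
          (i2 : Hom A2 B2) (d2 : Hom B2 C2),
      W A1 B1 C1 i1 d1 -> W A2 B2 C2 i2 d2 ->
      W (bp A1 A2) (bp B1 B2) (bp C1 C2) (hsum i1 i2) (hsum d1 d2).
Proof. destruct HW as (_ & _ & _ & H & _); exact H. Qed.
Lemma W_E0 : forall A : Ob, adm_monic W (idm A).
Proof. destruct HW as (_ & _ & _ & _ & H & _); exact H. Qed.
Lemma W_E2 : forall A B C (i : Hom A B) (t : Hom A C), adm_monic W i ->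
      exists (S : Ob) (u : Hom B S) (v : Hom C S), is_pushout i t u v /\ adm_monic W v.
Proof. destruct HW as (_ & _ & _ & _ & _ & _ & H & _); exact H. Qed.
Lemma W_E2op : forall A B C (h : Hom A C) (t : Hom B C), adm_epic W h ->
      exists (P : Ob) (u : Hom P A) (v : Hom P B), is_pullback h t u v /\ adm_epic W v.
Proof. destruct HW as (_ & _ & _ & _ & _ & _ & _ & H); exact H. Qed.

Lemma W_zero (A B C : Ob) (i : Hom A B) (d : Hom B C) : W A B C i d -> comp d i = hzero A C.
Proof. intro H. destruct (W_kc H) as [[H1 _] _]. exact H1. Qed.

Lemma ker_mono (A B C Y : Ob) (i : Hom A B) (d : Hom B C) (x y : Hom Y A) :
  is_kernel i d -> comp i x = comp i y -> x = y.
Proof.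
  intros [H0 H] E. destruct (H Y (comp i x)) as [g [_ Hg]].
  { rewrite comp_assoc, H0, comp_0l. reflexivity. }
  rewrite (Hg x eq_refl), (Hg y (eq_sym E)). reflexivity.
Qed.

Lemma coker_epi (A B C Y : Ob) (i : Hom A B) (d : Hom B C) (x y : Hom C Y) :
  is_cokernel i d -> comp x d = comp y d -> x = y.
Proof.
  intros [H0 H] E. destruct (H Y (comp x d)) as [g [_ Hg]].
  { rewrite <- comp_assoc, H0, comp_0r. reflexivity. }
  rewrite (Hg x eq_refl), (Hg y (eq_sym E)). reflexivity.
Qed.

Lemma iso_id (A : Ob) : iso (idm A).
Proof. exists (idm A). rewrite comp_id_l. split; reflexivity. Qed.

Lemma PO_ext (A B C S Y : Ob) (f : Hom A B) (g : Hom A C) (u : Hom B S) (v : Hom C S)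
  (x y : Hom S Y) : is_pushout f g u v -> comp x u = comp y u -> comp x v = comp y v -> x = y.
Proof.
  intros [H0 H] E1 E2. destruct (H Y (comp x u) (comp x v)) as [h [_ Hh]].
  { rewrite <- !comp_assoc, H0. reflexivity. }
  rewrite (Hh x (conj eq_refl eq_refl)), (Hh y (conj (eq_sym E1) (eq_sym E2))). reflexivity.
Qed.

Lemma PB_ext (A B C P Y : Ob) (f : Hom B A) (g : Hom C A) (u : Hom P B) (v : Hom P C)
  (x y : Hom Y P) : is_pullback f g u v -> comp u x = comp u y -> comp v x = comp v y -> x = y.
Proof.
  intros [H0 H] E1 E2. destruct (H Y (comp u x) (comp v x)) as [h [_ Hh]].
  { rewrite !comp_assoc, H0. reflexivity. }
  rewrite (Hh x (conj eq_refl eq_refl)), (Hh y (conj (eq_sym E1) (eq_sym E2))). reflexivity.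
Qed.

Lemma PO_iso (A B C S S' : Ob) (f : Hom A B) (g : Hom A C) (u : Hom B S) (v : Hom C S)
  (u' : Hom B S') (v' : Hom C S') :
  is_pushout f g u v -> is_pushout f g u' v' ->
  exists phi : Hom S S', iso phi /\ comp phi u = u' /\ comp phi v = v'.
Proof.
  intros P1 P2. pose proof P1 as [E1 H1]. pose proof P2 as [E2 H2].
  destruct (H1 S' u' v' E2) as [h [[Hu Hv] _]].
  destruct (H2 S u v E1) as [k [[Ku Kv] _]].
  exists h. split; [|split; assumption].
  exists k. split.
  - apply (PO_ext (x:=comp k h) (y:=idm S) P1); rewrite <- comp_assoc, comp_id_l.
    + rewrite Hu, Ku. reflexivity.
    + rewrite Hv, Kv. reflexivity.
  - apply (PO_ext (x:=comp h k) (y:=idm S') P2); rewrite <- comp_assoc, comp_id_l.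
    + rewrite Ku, Hu. reflexivity.
    + rewrite Kv, Hv. reflexivity.
Qed.

Lemma PB_iso (A B C P P' : Ob) (f : Hom B A) (g : Hom C A) (u : Hom P B) (v : Hom P C)
  (u' : Hom P' B) (v' : Hom P' C) :
  is_pullback f g u v -> is_pullback f g u' v' ->
  exists phi : Hom P' P, iso phi /\ comp u phi = u' /\ comp v phi = v'.
Proof.
  intros P1 P2. pose proof P1 as [E1 H1]. pose proof P2 as [E2 H2].
  destruct (H1 P' u' v' E2) as [h [[Hu Hv] _]].
  destruct (H2 P u v E1) as [k [[Ku Kv] _]].
  exists h. split; [|split; assumption].
  exists k. split.
  - apply (PB_ext (x:=comp k h) (y:=idm P') P2); rewrite comp_assoc, comp_id_r.
    + rewrite Ku, Hu. reflexivity.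
    + rewrite Kv, Hv. reflexivity.
  - apply (PB_ext (x:=comp h k) (y:=idm P) P1); rewrite comp_assoc, comp_id_r.
    + rewrite Hu, Ku. reflexivity.
    + rewrite Hv, Kv. reflexivity.
Qed.

Lemma W_transfer_coker (A B0 C0 B C : Ob) (i0 : Hom A B0) (e0 : Hom B0 C0)
  (phi : Hom B0 B) (i : Hom A B) (d : Hom B C) :
  W A B0 C0 i0 e0 -> iso phi -> comp phi i0 = i -> is_cokernel i d -> W A B C i d.
Proof.
  intros HE [psi [Hpsi1 Hpsi2]] Hi Hd.
  destruct (W_kc HE) as [_ Hc0].
  destruct Hc0 as [Z0 U0]. pose proof Hd as [Zd Ud].
  destruct (U0 C (comp d phi)) as [ga [Hga _]].
  { rewrite <- comp_assoc, Hi. exact Zd. }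
  destruct (Ud C0 (comp e0 psi)) as [de [Hde _]].
  { rewrite <- comp_assoc, <- Hi, (comp_assoc psi), Hpsi1, comp_id_l. exact Z0. }
  apply (W_iso (al := idm A) (be := phi) (ga := ga) HE).
  - apply iso_id.
  - exists psi; split; assumption.
  - exists de. split.
    + apply (coker_epi (i:=i0) (d:=e0)); [split; assumption|].
      rewrite <- comp_assoc, Hga, comp_assoc, Hde, <- comp_assoc, Hpsi1, comp_id_r, comp_id_l.
      reflexivity.
    + apply (coker_epi Hd). rewrite <- comp_assoc, Hde, comp_assoc, Hga, <- comp_assoc, Hpsi2,
        comp_id_r, comp_id_l. reflexivity.
  - rewrite comp_id_r. exact Hi.
  - exact Hga.
Qed.

Lemma W_transfer_ker (A0 B0 A B C : Ob) (i0 : Hom A0 B0) (e0 : Hom B0 C)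
  (phi : Hom B0 B) (i : Hom A B) (d : Hom B C) :
  W A0 B0 C i0 e0 -> iso phi -> comp d phi = e0 -> is_kernel i d -> W A B C i d.
Proof.
  intros HE [psi [Hpsi1 Hpsi2]] Hd Hi.
  destruct (W_kc HE) as [Hk0 _].
  destruct Hk0 as [Z0 U0]. pose proof Hi as [Zi Ui].
  destruct (Ui A0 (comp phi i0)) as [al [Hal _]].
  { rewrite comp_assoc, Hd. exact Z0. }
  destruct (U0 A (comp psi i)) as [be [Hbe _]].
  { rewrite <- Hd, <- !comp_assoc, (comp_assoc phi psi), Hpsi2, comp_id_l. exact Zi. }
  apply (W_iso (al := al) (be := phi) (ga := idm C) HE).
  - exists be. split.
    + apply (ker_mono (i:=i0) (d:=e0)); [split; assumption|].
      rewrite comp_assoc, Hbe, <- comp_assoc, Hal, comp_assoc, Hpsi1, comp_id_l, comp_id_r.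
      reflexivity.
    + apply (ker_mono Hi). rewrite comp_assoc, Hal, <- comp_assoc, Hbe, comp_assoc, Hpsi2,
        comp_id_l, comp_id_r. reflexivity.
  - exists psi; split; assumption.
  - apply iso_id.
  - symmetry; exact Hal.
  - rewrite comp_id_l. symmetry; exact Hd.
Qed.

Lemma PO_coker (A B C A' S : Ob) (i : Hom A B) (d : Hom B C) (a : Hom A A')
  (t : Hom B S) (i' : Hom A' S) (d' : Hom S C) :
  is_cokernel i d -> pushout_seq i d a t i' d' -> is_cokernel i' d'.
Proof.
  intros [Zd Ud] [HP [Ht Hi']]. split; [exact Hi'|].
  intros Y f Hf.
  destruct (Ud Y (comp f t)) as [g [Hg Ug]].
  { destruct HP as [Hc _]. rewrite <- comp_assoc, Hc, comp_assoc, Hf, comp_0l. reflexivity. }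
  exists g. split.
  - apply (PO_ext HP).
    + rewrite <- comp_assoc, Ht. exact Hg.
    + rewrite <- comp_assoc, Hi', comp_0r, Hf. reflexivity.
  - intros g' Hg'. apply Ug. rewrite <- Ht, comp_assoc, Hg'. reflexivity.
Qed.

Lemma PB_ker (A B C C' P : Ob) (i : Hom A B) (d : Hom B C) (c : Hom C' C)
  (s : Hom P B) (d' : Hom P C') (i' : Hom A P) :
  is_kernel i d -> pullback_seq i d c s d' i' -> is_kernel i' d'.
Proof.
  intros [Zi Ui] [HP [Hs Hi']]. split; [exact Hi'|].
  intros Y f Hf.
  destruct (Ui Y (comp s f)) as [g [Hg Ug]].
  { destruct HP as [Hc _]. rewrite comp_assoc, Hc, <- comp_assoc, Hf, comp_0r. reflexivity. }
  exists g. split.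
  - apply (PB_ext HP).
    + rewrite comp_assoc, Hs. exact Hg.
    + rewrite comp_assoc, Hi', comp_0l, Hf. reflexivity.
  - intros g' Hg'. apply Ug. rewrite <- Hs, <- comp_assoc, Hg'. reflexivity.
Qed.

Lemma push_ex (A C A' : Ob) (E : ses W A C) (a : Hom A A') :
  exists (S : Ob) (t : Hom (smid E) S) (i' : Hom A' S) (d' : Hom S C),
    pushout_seq (si E) (sd E) a t i' d'.
Proof.
  destruct (W_E2 a (ex_intro _ C (ex_intro _ (sd E) (sW E)))) as [S [u [v [HP _]]]].
  pose proof HP as [Hc U].
  destruct (U C (sd E) (hzero A' C)) as [d' [[H1 H2] _]].
  { rewrite comp_0l. apply (W_zero (sW E)). }
  exists S, u, v, d'. split; [exact HP| split; assumption].
Qed.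

Lemma push_W (A C A' S : Ob) (E : ses W A C) (a : Hom A A')
  (t : Hom (smid E) S) (i' : Hom A' S) (d' : Hom S C) :
  pushout_seq (si E) (sd E) a t i' d' -> W A' S C i' d'.
Proof.
  intro HS.
  destruct (W_E2 a (ex_intro _ C (ex_intro _ (sd E) (sW E)))) as [S0 [u0 [v0 [HP0 [C0 [e0 He0]]]]]].
  destruct (PO_iso HP0 (proj1 HS)) as [phi [Hphi [_ Hv]]].
  apply (W_transfer_coker He0 Hphi Hv).
  apply (PO_coker (proj2 (W_kc (sW E))) HS).
Qed.

Lemma pull_ex (A C C' : Ob) (E : ses W A C) (c : Hom C' C) :
  exists (P : Ob) (s : Hom P (smid E)) (d' : Hom P C') (i' : Hom A P),
    pullback_seq (si E) (sd E) c s d' i'.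
Proof.
  destruct (W_E2op c (ex_intro _ A (ex_intro _ (si E) (sW E)))) as [P [u [v [HP _]]]].
  pose proof HP as [Hc U].
  destruct (U A (si E) (hzero A C')) as [i' [[H1 H2] _]].
  { rewrite comp_0r. apply (W_zero (sW E)). }
  exists P, u, v, i'. split; [exact HP| split; assumption].
Qed.

Lemma pull_W (A C C' P : Ob) (E : ses W A C) (c : Hom C' C)
  (s : Hom P (smid E)) (d' : Hom P C') (i' : Hom A P) :
  pullback_seq (si E) (sd E) c s d' i' -> W A P C' i' d'.
Proof.
  intro HS.
  destruct (W_E2op c (ex_intro _ A (ex_intro _ (si E) (sW E)))) as [P0 [u0 [v0 [HP0 [A0 [i0 Hi0]]]]]].
  destruct (PB_iso (proj1 HS) HP0) as [phi [Hphi [_ Hv]]].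
  apply (W_transfer_ker Hi0 Hphi Hv).
  apply (PB_ker (proj1 (W_kc (sW E))) HS).
Qed.

Definition Mor (A C A' C' : Ob) (E : ses W A C) (F : ses W A' C') (a : Hom A A') (c : Hom C C')
  : Prop :=
  exists b : Hom (smid E) (smid F),
    comp b (si E) = comp (si F) a /\ comp (sd F) b = comp c (sd E).

Lemma five (A C : Ob) (E F : ses W A C) : Mor E F (idm A) (idm C) -> ses_equiv E F.
Proof.
  intros [k [Hki Hdk]]. rewrite comp_id_r in Hki. rewrite comp_id_l in Hdk.
  destruct E as [B i d HE]; destruct F as [B' i' d' HF]; simpl in *.
  destruct (W_kc HE) as [[Zi Ui] [Zd Ud]].
  destruct (W_kc HF) as [[Zi' Ui'] [Zd' Ud']].
  destruct (W_E2op d' (ex_intro _ A (ex_intro _ i HE))) as [P [u [v [HP [K [i0 H0]]]]]].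
  pose proof HP as [Hdu UP].
  destruct (W_kc H0) as [_ [Z0 U0]].
  destruct (Ui' P (hadd v (hopp (comp k u)))) as [q [Hq _]].
  { rewrite comp_addr, comp_oppr, comp_assoc, Hdk, <- Hdu, hadd_opp. reflexivity. }
  destruct (Ui K (comp u i0)) as [y [Hy _]].
  { rewrite comp_assoc, Hdu, <- comp_assoc, Z0, comp_0r. reflexivity. }
  assert (Hqi0 : comp q i0 = hopp y).
  { apply (ker_mono (i:=i') (d:=d')); [split; assumption|].
    rewrite comp_assoc, Hq, comp_addl, Z0, comp_oppl, <- comp_assoc, <- Hy, comp_assoc, Hki,
      comp_oppr, hadd_0l. reflexivity. }
  destruct (U0 B (hadd u (comp i q))) as [g [Hg _]].
  { rewrite comp_addl, <- comp_assoc, Hqi0, <- Hy, comp_oppr, hadd_opp. reflexivity. }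
  destruct (UP B (idm B) k) as [s [[Hus Hvs] _]].
  { rewrite comp_id_r. symmetry; exact Hdk. }
  assert (Hqs : comp q s = hzero B A).
  { apply (ker_mono (i:=i') (d:=d')); [split; assumption|].
    rewrite comp_assoc, Hq, comp_addl, comp_oppl, <- comp_assoc, Hus, Hvs, comp_id_r,
      hadd_opp, comp_0r. reflexivity. }
  exists k. split; [|split; assumption].
  exists g. split.
  - simpl. rewrite <- Hvs, comp_assoc, Hg, comp_addl, Hus, <- comp_assoc, Hqs, !comp_0r, hadd_0.
    reflexivity.
  - simpl. apply (coker_epi (i:=i0) (d:=v)); [split; assumption|].
    rewrite <- comp_assoc, Hg, comp_addr, comp_assoc, Hki, Hq, comp_id_l.
    rewrite (hadd_comm v), hadd_assoc, hadd_opp, hadd_0l. reflexivity.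
Qed.

Lemma equiv_refl (A C : Ob) (E : ses W A C) : ses_equiv E E.
Proof. exists (idm _). split; [apply iso_id|]. rewrite comp_id_l, comp_id_r. split; reflexivity. Qed.

Lemma equiv_Mor (A C : Ob) (E F : ses W A C) : ses_equiv E F -> Mor E F (idm A) (idm C).
Proof. intros [phi [_ [H1 H2]]]. exists phi. rewrite comp_id_r, comp_id_l. split; assumption. Qed.

Lemma equiv_sym (A C : Ob) (E F : ses W A C) : ses_equiv E F -> ses_equiv F E.
Proof.
  intros [phi [[psi [P1 P2]] [H1 H2]]]. exists psi. split; [exists phi; split; assumption|split].
  - rewrite <- H1, comp_assoc, P1, comp_id_l. reflexivity.
  - rewrite <- H2, <- comp_assoc, P2, comp_id_r. reflexivity.
Qed.

Lemma Mor_comp (A C A' C' A'' C'' : Ob) (E : ses W A C) (F : ses W A' C') (G : ses W A'' C'')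
  a c a' c' : Mor E F a c -> Mor F G a' c' -> Mor E G (comp a' a) (comp c' c).
Proof.
  intros [b [H1 H2]] [b' [H1' H2']]. exists (comp b' b). split.
  - rewrite <- comp_assoc, H1, comp_assoc, H1', comp_assoc. reflexivity.
  - rewrite comp_assoc, H2', <- comp_assoc, H2, comp_assoc. reflexivity.
Qed.

Lemma Mor_comp_id (A C A' C' : Ob) (E : ses W A C) (F G : ses W A' C')
  a c : Mor E F a c -> ses_equiv F G -> Mor E G a c.
Proof.
  intros H1 H2. pose proof (Mor_comp H1 (equiv_Mor H2)) as H. rewrite !comp_id_l in H. exact H.
Qed.

Lemma id_comp_Mor (A C A' C' : Ob) (E F : ses W A C) (G : ses W A' C')
  a c : ses_equiv E F -> Mor F G a c -> Mor E G a c.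
Proof.
  intros H1 H2. pose proof (Mor_comp (equiv_Mor H1) H2) as H. rewrite !comp_id_r in H. exact H.
Qed.

Lemma equiv_trans (A C : Ob) (E F G : ses W A C) :
  ses_equiv E F -> ses_equiv F G -> ses_equiv E G.
Proof. intros H1 H2. apply five. apply (id_comp_Mor H1 (equiv_Mor H2)). Qed.

Lemma pushS_ex (A C A' : Ob) (E : ses W A C) (a : Hom A A') :
  exists F : ses W A' C, exists t, pushout_seq (si E) (sd E) a t (si F) (sd F).
Proof.
  destruct (push_ex E a) as [S [t [i' [d' H]]]]. exists (Ses (push_W H)), t. exact H.
Qed.

Definition pushS (A C A' : Ob) (a : Hom A A') (E : ses W A C) : ses W A' C :=
  proj1_sig (constructive_indefinite_description _ (pushS_ex E a)).

Lemma pushS_spec (A C A' : Ob) (a : Hom A A') (E : ses W A C) :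
  exists t, pushout_seq (si E) (sd E) a t (si (pushS a E)) (sd (pushS a E)).
Proof. unfold pushS. destruct (constructive_indefinite_description _ _) as [F HF]. exact HF. Qed.

Lemma pullS_ex (A C C' : Ob) (E : ses W A C) (c : Hom C' C) :
  exists F : ses W A C', exists s, pullback_seq (si E) (sd E) c s (sd F) (si F).
Proof.
  destruct (pull_ex E c) as [P [s [d' [i' H]]]]. exists (Ses (pull_W H)), s. exact H.
Qed.

Definition pullS (A C C' : Ob) (c : Hom C' C) (E : ses W A C) : ses W A C' :=
  proj1_sig (constructive_indefinite_description _ (pullS_ex E c)).

Lemma pullS_spec (A C C' : Ob) (c : Hom C' C) (E : ses W A C) :
  exists s, pullback_seq (si E) (sd E) c s (sd (pullS c E)) (si (pullS c E)).
Proof. unfold pullS. destruct (constructive_indefinite_description _ _) as [F HF]. exact HF. Qed.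

Lemma Mor_push (A C A' : Ob) (a : Hom A A') (E : ses W A C) : Mor E (pushS a E) a (idm C).
Proof.
  destruct (pushS_spec a E) as [t [[Hc _] [Ht _]]]. exists t. split; [exact Hc|].
  rewrite comp_id_l. exact Ht.
Qed.

Lemma Mor_pull (A C C' : Ob) (c : Hom C' C) (E : ses W A C) : Mor (pullS c E) E (idm A) c.
Proof.
  destruct (pullS_spec c E) as [s [[Hc _] [Hs _]]]. exists s. split; [|exact Hc].
  rewrite comp_id_r. exact Hs.
Qed.

Lemma L1 (A C A' : Ob) (a : Hom A A') (E : ses W A C) (F : ses W A' C) :
  Mor E F a (idm C) -> ses_equiv (pushS a E) F.
Proof.
  intros [b [Hb1 Hb2]]. rewrite comp_id_l in Hb2.
  destruct (pushS_spec a E) as [t [HP [Ht Hi']]].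
  pose proof HP as [Hc U].
  destruct (U _ b (si F) Hb1) as [h [[Hh1 Hh2] _]].
  apply five. exists h. split.
  - rewrite comp_id_r. exact Hh2.
  - rewrite comp_id_l. apply (PO_ext HP).
    + rewrite <- comp_assoc, Hh1, Hb2, Ht. reflexivity.
    + rewrite <- comp_assoc, Hh2, Hi', (W_zero (sW F)). reflexivity.
Qed.

Lemma L2 (A C C' : Ob) (c : Hom C' C) (E : ses W A C) (F : ses W A C') :
  Mor F E (idm A) c -> ses_equiv F (pullS c E).
Proof.
  intros [b [Hb1 Hb2]]. rewrite comp_id_r in Hb1.
  destruct (pullS_spec c E) as [s [HP [Hs Hi']]].
  pose proof HP as [Hc U].
  destruct (U _ b (sd F) Hb2) as [h [[Hh1 Hh2] _]].
  apply five. exists h. split.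
  - rewrite comp_id_r. apply (PB_ext HP).
    + rewrite comp_assoc, Hh1, Hb1, Hs. reflexivity.
    + rewrite comp_assoc, Hh2, Hi', (W_zero (sW F)). reflexivity.
  - rewrite comp_id_l. exact Hh2.
Qed.

Lemma L3 (A C A' C' : Ob) (E : ses W A C) (F : ses W A' C') (a : Hom A A') (c : Hom C C') :
  Mor E F a c -> ses_equiv (pushS a E) (pullS c F).
Proof.
  intros [b [Hb1 Hb2]].
  destruct (pullS_spec c F) as [s [HP [Hs Hi']]].
  pose proof HP as [Hc U].
  destruct (U _ b (sd E) Hb2) as [be [[Hbe1 Hbe2] _]].
  apply L1. exists be. split.
  - apply (PB_ext HP).
    + rewrite !comp_assoc, Hbe1, Hs, Hb1. reflexivity.
    + rewrite !comp_assoc, Hbe2, Hi', (W_zero (sW E)), comp_0l. reflexivity.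
  - rewrite comp_id_l. exact Hbe2.
Qed.

Definition dsum (A1 C1 A2 C2 : Ob) (E1 : ses W A1 C1) (E2 : ses W A2 C2)
  : ses W (bp A1 A2) (bp C1 C2) :=
  Ses
      (W_sum (sW E1) (sW E2)).

Lemma Mor_dsum (A1 C1 A2 C2 A1' C1' A2' C2' : Ob) (E1 : ses W A1 C1) (E2 : ses W A2 C2)
  (F1 : ses W A1' C1') (F2 : ses W A2' C2') a1 c1 a2 c2 :
  Mor E1 F1 a1 c1 -> Mor E2 F2 a2 c2 -> Mor (dsum E1 E2) (dsum F1 F2) (hsum a1 a2) (hsum c1 c2).
Proof.
  intros [b1 [H1 H1']] [b2 [H2 H2']]. exists (hsum b1 b2). simpl.
  rewrite !hsum_comp, H1, H2, H1', H2'. split; reflexivity.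
Qed.

Lemma push_cong (A C A' : Ob) (a : Hom A A') (E E' : ses W A C) :
  ses_equiv E E' -> ses_equiv (pushS a E) (pushS a E').
Proof.
  intro H. apply equiv_sym. apply L1. exact (id_comp_Mor (equiv_sym H) (Mor_push a E)).
Qed.

Lemma pull_cong (A C C' : Ob) (c : Hom C' C) (E E' : ses W A C) :
  ses_equiv E E' -> ses_equiv (pullS c E) (pullS c E').
Proof. intro H. apply L2. exact (Mor_comp_id (Mor_pull c E) H). Qed.

Lemma dsum_cong (A1 C1 A2 C2 : Ob) (E1 E1' : ses W A1 C1) (E2 E2' : ses W A2 C2) :
  ses_equiv E1 E1' -> ses_equiv E2 E2' -> ses_equiv (dsum E1 E2) (dsum E1' E2').
Proof.
  intros H1 H2. apply five. pose proof (Mor_dsum (equiv_Mor H1) (equiv_Mor H2)) as H.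
  rewrite !hsum_id in H. exact H.
Qed.

Definition sumS (A C : Ob) (E1 E2 : ses W A C) : ses W A C :=
  pushS (codiag A) (pullS (diag C) (dsum E1 E2)).

Lemma sum_cong (A C : Ob) (E1 E1' E2 E2' : ses W A C) :
  ses_equiv E1 E1' -> ses_equiv E2 E2' -> ses_equiv (sumS E1 E2) (sumS E1' E2').
Proof. intros H1 H2. apply push_cong, pull_cong, dsum_cong; assumption. Qed.

Lemma push_id (A C : Ob) (E : ses W A C) : ses_equiv (pushS (idm A) E) E.
Proof. apply L1, equiv_Mor, equiv_refl. Qed.

Lemma pull_id (A C : Ob) (E : ses W A C) : ses_equiv E (pullS (idm C) E).
Proof. apply L2, equiv_Mor, equiv_refl. Qed.

Lemma push_comp (A A' A'' C : Ob) (a : Hom A A') (b : Hom A' A'') (E : ses W A C) :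
  ses_equiv (pushS (comp b a) E) (pushS b (pushS a E)).
Proof.
  apply L1. pose proof (Mor_comp (Mor_push a E) (Mor_push b (pushS a E))) as H.
  rewrite comp_id_l in H. exact H.
Qed.

Lemma pull_comp (A C C' C'' : Ob) (c : Hom C' C) (c' : Hom C'' C') (E : ses W A C) :
  ses_equiv (pullS c' (pullS c E)) (pullS (comp c c') E).
Proof.
  apply L2. pose proof (Mor_comp (Mor_pull c' (pullS c E)) (Mor_pull c E)) as H.
  rewrite comp_id_l in H. exact H.
Qed.

Lemma push_pull (A A' C C' : Ob) (a : Hom A A') (c : Hom C' C) (E : ses W A C) :
  ses_equiv (pushS a (pullS c E)) (pullS c (pushS a E)).
Proof.
  apply L3. pose proof (Mor_comp (Mor_pull c E) (Mor_push a E)) as H.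
  rewrite comp_id_l, comp_id_r in H. exact H.
Qed.

Lemma Z_ex (A : Ob) : exists p : {C0 : Ob & ses W A C0}, True.
Proof.
  destruct (W_E0 A) as [C0 [d H]]. exists (existT _ C0 (Ses H)). exact I.
Qed.

Definition Zpair (A : Ob) : {C0 : Ob & ses W A C0} :=
  proj1_sig (constructive_indefinite_description _ (Z_ex A)).

Definition zeroS (A C : Ob) : ses W A C :=
  pullS (hzero C (projT1 (Zpair A))) (projT2 (Zpair A)).

Lemma Mor_zero (A C A' C' : Ob) (E : ses W A C) (F : ses W A' C') :
  Mor E F (hzero A A') (hzero C C').
Proof. exists (hzero _ _). rewrite !comp_0l, !comp_0r. split; reflexivity. Qed.

Lemma push_zero (A A' C : Ob) (E : ses W A C) : ses_equiv (pushS (hzero A A') E) (zeroS A' C).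
Proof. apply L3, Mor_zero. Qed.

Lemma pull_zero (A C C' : Ob) (E : ses W A C) : ses_equiv (pullS (hzero C' C) E) (zeroS A C').
Proof.
  apply equiv_sym. eapply equiv_trans; [apply equiv_sym; apply (push_zero A (zeroS A C'))|].
  apply L3, Mor_zero.
Qed.

Lemma push_dsum (A1 C1 A2 C2 A1' A2' : Ob) (E1 : ses W A1 C1) (E2 : ses W A2 C2)
  (a1 : Hom A1 A1') (a2 : Hom A2 A2') :
  ses_equiv (pushS (hsum a1 a2) (dsum E1 E2)) (dsum (pushS a1 E1) (pushS a2 E2)).
Proof.
  apply L1. pose proof (Mor_dsum (Mor_push a1 E1) (Mor_push a2 E2)) as H.
  rewrite hsum_id in H. exact H.
Qed.

Lemma pull_dsum (A1 C1 A2 C2 C1' C2' : Ob) (E1 : ses W A1 C1) (E2 : ses W A2 C2)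
  (c1 : Hom C1' C1) (c2 : Hom C2' C2) :
  ses_equiv (dsum (pullS c1 E1) (pullS c2 E2)) (pullS (hsum c1 c2) (dsum E1 E2)).
Proof.
  apply L2. pose proof (Mor_dsum (Mor_pull c1 E1) (Mor_pull c2 E2)) as H.
  rewrite hsum_id in H. exact H.
Qed.

Lemma Mor_diag (A C : Ob) (E : ses W A C) : Mor E (dsum E E) (diag A) (diag C).
Proof.
  exists (diag (smid E)). simpl. rewrite !diag_nat. split; reflexivity.
Qed.

Lemma Mor_codiag (A C : Ob) (E : ses W A C) : Mor (dsum E E) E (codiag A) (codiag C).
Proof.
  exists (codiag (smid E)). simpl. rewrite !codiag_nat. split; reflexivity.
Qed.

Ltac etr := eapply equiv_trans.
Ltac esy := apply equiv_sym.

Lemma push_add (A A' C : Ob) (a b : Hom A A') (E : ses W A C) :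
  ses_equiv (pushS (hadd a b) E) (sumS (pushS a E) (pushS b E)).
Proof.
  rewrite sum_via. etr; [apply push_comp|]. unfold sumS. apply push_cong.
  etr; [apply push_comp|].
  etr; [apply push_cong, L3, Mor_diag|].
  etr; [apply push_pull|].
  apply pull_cong, push_dsum.
Qed.

Lemma pull_add (A C C' : Ob) (c e : Hom C' C) (E : ses W A C) :
  ses_equiv (pullS (hadd c e) E) (sumS (pullS c E) (pullS e E)).
Proof.
  rewrite sum_via. etr; [esy; apply pull_comp|].
  etr; [esy; apply pull_comp|].
  etr; [apply pull_cong, pull_cong, equiv_sym, L3, Mor_codiag|].
  etr; [apply pull_cong; esy; apply push_pull|].
  etr; [esy; apply push_pull|]. unfold sumS. apply push_cong, pull_cong.
  esy. apply pull_dsum.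
Qed.

Lemma push_sum (A A' C : Ob) (a : Hom A A') (E F : ses W A C) :
  ses_equiv (pushS a (sumS E F)) (sumS (pushS a E) (pushS a F)).
Proof.
  unfold sumS. etr; [esy; apply push_comp|]. rewrite codiag_nat.
  etr; [apply push_comp|]. apply push_cong.
  etr; [apply push_pull|]. apply pull_cong, push_dsum.
Qed.

Lemma pull_sum (A C C' : Ob) (c : Hom C' C) (E F : ses W A C) :
  ses_equiv (pullS c (sumS E F)) (sumS (pullS c E) (pullS c F)).
Proof.
  unfold sumS. etr; [esy; apply push_pull|]. apply push_cong.
  etr; [apply pull_comp|]. rewrite diag_nat.
  etr; [esy; apply pull_comp|]. apply pull_cong. esy. apply pull_dsum.
Qed.

Lemma sum_zero_r (A C : Ob) (E : ses W A C) : ses_equiv (sumS E (zeroS A C)) E.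
Proof.
  etr; [apply sum_cong; [esy; apply push_id| esy; apply (push_zero A E)]|].
  etr; [esy; apply push_add|]. rewrite hadd_0. apply push_id.
Qed.

Lemma sum_zero_l (A C : Ob) (E : ses W A C) : ses_equiv (sumS (zeroS A C) E) E.
Proof.
  etr; [apply sum_cong; [esy; apply (push_zero A E)| esy; apply push_id]|].
  etr; [esy; apply push_add|]. rewrite hadd_0l. apply push_id.
Qed.

Lemma sum_opp (A C : Ob) (E : ses W A C) :
  ses_equiv (sumS E (pushS (hopp (idm A)) E)) (zeroS A C).
Proof.
  etr; [apply sum_cong; [esy; apply push_id| apply equiv_refl]|].
  etr; [esy; apply push_add|]. rewrite hadd_opp. apply push_zero.
Qed.

Definition Phi (AF CF A C : Ob) (F : ses W AF CF) (a : Hom AF A) (c : Hom C CF) : ses W A C :=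
  pushS a (pullS c F).

Lemma Phi_addl (AF CF A C : Ob) (F : ses W AF CF) (a a' : Hom AF A) (c : Hom C CF) :
  ses_equiv (Phi F (hadd a a') c) (sumS (Phi F a c) (Phi F a' c)).
Proof. apply push_add. Qed.

Lemma Phi_addr (AF CF A C : Ob) (F : ses W AF CF) (a : Hom AF A) (c c' : Hom C CF) :
  ses_equiv (Phi F a (hadd c c')) (sumS (Phi F a c) (Phi F a c')).
Proof. unfold Phi. etr; [apply push_cong, pull_add|]. apply push_sum. Qed.

Lemma Phi_val (AF CF A C C0 : Ob) (F : ses W AF CF) (E : ses W A C0) (p : Hom AF A)
  (q : Hom CF C0) (c : Hom C CF) :
  Mor F E p q -> ses_equiv (Phi F p c) (pullS (comp q c) E).
Proof.
  intro H. unfold Phi. etr; [apply push_pull|]. etr; [apply pull_cong, L3, H|].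
  apply pull_comp.
Qed.

Lemma Phi_one (AF CF A C : Ob) (F : ses W AF CF) (E : ses W A C) (p : Hom AF A)
  (q : Hom CF C) (c : Hom C CF) :
  Mor F E p q -> comp q c = idm C -> ses_equiv (Phi F p c) E.
Proof. intros H1 H2. etr; [apply (Phi_val c H1)|]. rewrite H2. esy. apply pull_id. Qed.

Lemma Phi_zero (AF CF A C C0 : Ob) (F : ses W AF CF) (E : ses W A C0) (p : Hom AF A)
  (q : Hom CF C0) (c : Hom C CF) :
  Mor F E p q -> comp q c = hzero C C0 -> ses_equiv (Phi F p c) (zeroS A C).
Proof. intros H1 H2. etr; [apply (Phi_val c H1)|]. rewrite H2. apply pull_zero. Qed.

Lemma two_sum (AF CF A C : Ob) (F : ses W AF CF) (p1 p2 : Hom AF A) (j1 j2 : Hom C CF)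
  (E1 E2 : ses W A C) :
  ses_equiv (Phi F p1 j1) E1 -> ses_equiv (Phi F p1 j2) (zeroS A C) ->
  ses_equiv (Phi F p2 j1) (zeroS A C) -> ses_equiv (Phi F p2 j2) E2 ->
  ses_equiv (Phi F (hadd p1 p2) (hadd j1 j2)) (sumS E1 E2).
Proof.
  intros H11 H12 H21 H22.
  etr; [apply Phi_addl|]. etr; [apply sum_cong; apply Phi_addr|].
  apply sum_cong.
  - etr; [apply sum_cong; [exact H11|exact H12]|]. apply sum_zero_r.
  - etr; [apply sum_cong; [exact H21|exact H22]|]. apply sum_zero_l.
Qed.

Lemma zero_suml (AF CF A C : Ob) (F : ses W AF CF) (p1 p2 : Hom AF A) (j : Hom C CF) :
  ses_equiv (Phi F p1 j) (zeroS A C) -> ses_equiv (Phi F p2 j) (zeroS A C) ->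
  ses_equiv (Phi F (hadd p1 p2) j) (zeroS A C).
Proof.
  intros H1 H2. etr; [apply Phi_addl|]. etr; [apply sum_cong; [exact H1|exact H2]|].
  apply sum_zero_r.
Qed.

Lemma zero_sumr (AF CF A C : Ob) (F : ses W AF CF) (p : Hom AF A) (j1 j2 : Hom C CF) :
  ses_equiv (Phi F p j1) (zeroS A C) -> ses_equiv (Phi F p j2) (zeroS A C) ->
  ses_equiv (Phi F p (hadd j1 j2)) (zeroS A C).
Proof.
  intros H1 H2. etr; [apply Phi_addr|]. etr; [apply sum_cong; [exact H1|exact H2]|].
  apply sum_zero_r.
Qed.

Lemma Mor_bp1 (A1 C1 A2 C2 : Ob) (E1 : ses W A1 C1) (E2 : ses W A2 C2) :
  Mor (dsum E1 E2) E1 (bp1 A1 A2) (bp1 C1 C2).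
Proof. exists (bp1 _ _). simpl. rewrite !bp1_hsum. split; reflexivity. Qed.

Lemma Mor_bp2 (A1 C1 A2 C2 : Ob) (E1 : ses W A1 C1) (E2 : ses W A2 C2) :
  Mor (dsum E1 E2) E2 (bp2 A1 A2) (bp2 C1 C2).
Proof. exists (bp2 _ _). simpl. rewrite !bp2_hsum. split; reflexivity. Qed.

Lemma sum_comm (A C : Ob) (E1 E2 : ses W A C) : ses_equiv (sumS E1 E2) (sumS E2 E1).
Proof.
  pose proof (Mor_bp1 E1 E2) as M1. pose proof (Mor_bp2 E1 E2) as M2.
  assert (H11 : ses_equiv (Phi (dsum E1 E2) (bp1 A A) (bi1 C C)) E1)
    by (apply (Phi_one M1), bp1_bi1).
  assert (H12 : ses_equiv (Phi (dsum E1 E2) (bp1 A A) (bi2 C C)) (zeroS A C))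
    by (apply (Phi_zero M1), bp1_bi2).
  assert (H21 : ses_equiv (Phi (dsum E1 E2) (bp2 A A) (bi1 C C)) (zeroS A C))
    by (apply (Phi_zero M2), bp2_bi1).
  assert (H22 : ses_equiv (Phi (dsum E1 E2) (bp2 A A) (bi2 C C)) E2)
    by (apply (Phi_one M2), bp2_bi2).
  pose proof (two_sum H11 H12 H21 H22) as S1.
  pose proof (two_sum H22 H21 H12 H11) as S2.
  rewrite (hadd_comm (bp2 A A)), (hadd_comm (bi2 C C)) in S2.
  etr; [esy; exact S1|]. exact S2.
Qed.

Lemma bp1_bi1' (A B Y : Ob) (f : Hom Y A) : comp (bp1 A B) (comp (bi1 A B) f) = f.
Proof. rewrite comp_assoc, bp1_bi1, comp_id_l. reflexivity. Qed.
Lemma bp2_bi2' (A B Y : Ob) (f : Hom Y B) : comp (bp2 A B) (comp (bi2 A B) f) = f.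
Proof. rewrite comp_assoc, bp2_bi2, comp_id_l. reflexivity. Qed.
Lemma bp1_bi2' (A B Y : Ob) (f : Hom Y B) : comp (bp1 A B) (comp (bi2 A B) f) = hzero Y A.
Proof. rewrite comp_assoc, bp1_bi2, comp_0l. reflexivity. Qed.
Lemma bp2_bi1' (A B Y : Ob) (f : Hom Y A) : comp (bp2 A B) (comp (bi1 A B) f) = hzero Y B.
Proof. rewrite comp_assoc, bp2_bi1, comp_0l. reflexivity. Qed.

Ltac bpsimp := rewrite <- ?comp_assoc;
  repeat (rewrite ?bp1_bi1', ?bp2_bi2', ?bp1_bi2', ?bp2_bi1', ?bp1_bi1, ?bp2_bi2, ?bp1_bi2,
            ?bp2_bi1, ?comp_0l, ?comp_0r, ?comp_id_l, ?comp_id_r); reflexivity.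

Lemma sum_assoc (A C : Ob) (E1 E2 E3 : ses W A C) :
  ses_equiv (sumS E1 (sumS E2 E3)) (sumS (sumS E1 E2) E3).
Proof.
  set (F := dsum E1 (dsum E2 E3)).
  pose proof (Mor_bp1 E1 (dsum E2 E3)) as M1.
  pose proof (Mor_comp (Mor_bp2 E1 (dsum E2 E3)) (Mor_bp1 E2 E3)) as M2.
  pose proof (Mor_comp (Mor_bp2 E1 (dsum E2 E3)) (Mor_bp2 E2 E3)) as M3.
  fold F in M1, M2, M3.
  set (p1 := bp1 A (bp A A)). set (p2 := comp (bp1 A A) (bp2 A (bp A A))).
  set (p3 := comp (bp2 A A) (bp2 A (bp A A))).
  set (j1 := bi1 C (bp C C)). set (j2 := comp (bi2 C (bp C C)) (bi1 C C)).
  set (j3 := comp (bi2 C (bp C C)) (bi2 C C)).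
  assert (H11 : ses_equiv (Phi F p1 j1) E1) by (apply (Phi_one M1); unfold j1; bpsimp).
  assert (H12 : ses_equiv (Phi F p1 j2) (zeroS A C)) by (apply (Phi_zero M1); unfold j2; bpsimp).
  assert (H13 : ses_equiv (Phi F p1 j3) (zeroS A C)) by (apply (Phi_zero M1); unfold j3; bpsimp).
  assert (H21 : ses_equiv (Phi F p2 j1) (zeroS A C)) by (apply (Phi_zero M2); unfold j1; bpsimp).
  assert (H22 : ses_equiv (Phi F p2 j2) E2) by (apply (Phi_one M2); unfold j2; bpsimp).
  assert (H23 : ses_equiv (Phi F p2 j3) (zeroS A C)) by (apply (Phi_zero M2); unfold j3; bpsimp).
  assert (H31 : ses_equiv (Phi F p3 j1) (zeroS A C)) by (apply (Phi_zero M3); unfold j1; bpsimp).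
  assert (H32 : ses_equiv (Phi F p3 j2) (zeroS A C)) by (apply (Phi_zero M3); unfold j2; bpsimp).
  assert (H33 : ses_equiv (Phi F p3 j3) E3) by (apply (Phi_one M3); unfold j3; bpsimp).
  pose proof (two_sum (two_sum H11 H12 H21 H22) (zero_suml H13 H23) (zero_sumr H31 H32) H33)
    as SL.
  pose proof (two_sum H11 (zero_sumr H12 H13) (zero_suml H21 H31) (two_sum H22 H23 H32 H33))
    as SR.
  rewrite !hadd_assoc in SR.
  etr; [esy; exact SR|]. exact SL.
Qed.

Definition rep (A C : Ob) (x : Ext W C A) : ses W A C :=
  proj1_sig (constructive_indefinite_description _ (proj2_sig x)).

Lemma cls_rep (A C : Ob) (x : Ext W C A) : cls (rep x) = x.
Proof.
  unfold rep. destruct x as [P HP]. simpl.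
  destruct (constructive_indefinite_description _ HP) as [E HE]. simpl.
  apply eq_sig_hprop; [intros; apply proof_irrelevance|]. simpl. symmetry; exact HE.
Qed.

Lemma cls_surj (A C : Ob) (x : Ext W C A) : exists E, x = cls E.
Proof. exists (rep x). symmetry; apply cls_rep. Qed.

Lemma cls_eq (A C : Ob) (E F : ses W A C) : ses_equiv E F -> cls E = cls F.
Proof.
  intro H. apply eq_sig_hprop; [intros; apply proof_irrelevance|]. simpl.
  apply functional_extensionality. intro G. apply propositional_extensionality. split; intro H'.
  - exact (equiv_trans (equiv_sym H) H').
  - exact (equiv_trans H H').
Qed.

Lemma cls_inj (A C : Ob) (E F : ses W A C) : cls E = cls F -> ses_equiv E F.
Proof.
  intro H. apply (f_equal (@proj1_sig _ _)) in H. simpl in H.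
  rewrite H. apply equiv_refl.
Qed.

Lemma rep_cls (A C : Ob) (E : ses W A C) : ses_equiv (rep (cls E)) E.
Proof. apply cls_inj. apply cls_rep. Qed.

Definition pushE (A A' C : Ob) (a : Hom A A') (x : Ext W C A) : Ext W C A' :=
  cls (pushS a (rep x)).
Definition pullE (A C C' : Ob) (c : Hom C' C) (x : Ext W C A) : Ext W C' A :=
  cls (pullS c (rep x)).
Definition addE (A C : Ob) (x y : Ext W C A) : Ext W C A := cls (sumS (rep x) (rep y)).
Definition zeroE (A C : Ob) : Ext W C A := cls (zeroS A C).
Definition oppE (A C : Ob) (x : Ext W C A) : Ext W C A := cls (pushS (hopp (idm A)) (rep x)).

Lemma pushE_cls (A A' C : Ob) (a : Hom A A') (E : ses W A C) : pushE a (cls E) = cls (pushS a E).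
Proof. apply cls_eq, push_cong, rep_cls. Qed.
Lemma pullE_cls (A C C' : Ob) (c : Hom C' C) (E : ses W A C) : pullE c (cls E) = cls (pullS c E).
Proof. apply cls_eq, pull_cong, rep_cls. Qed.
Lemma addE_cls (A C : Ob) (E F : ses W A C) : addE (cls E) (cls F) = cls (sumS E F).
Proof. apply cls_eq, sum_cong; apply rep_cls. Qed.
Lemma oppE_cls (A C : Ob) (E : ses W A C) : oppE (cls E) = cls (pushS (hopp (idm A)) E).
Proof. apply cls_eq, push_cong, rep_cls. Qed.

Lemma main_in :
  exists (pushE : forall (A A' C : Ob), Hom A A' -> Ext W C A -> Ext W C A')
         (pullE : forall (A C C' : Ob), Hom C' C -> Ext W C A -> Ext W C' A)
         (addE : forall (A C : Ob), Ext W C A -> Ext W C A -> Ext W C A)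
         (zeroE : forall (A C : Ob), Ext W C A)
         (oppE : forall (A C : Ob), Ext W C A -> Ext W C A),
    (forall (A C A' : Ob) (E : ses W A C) (a : Hom A A'),
        exists (S : Ob) (t : Hom (smid E) S) (i' : Hom A' S) (d' : Hom S C),
          pushout_seq (si E) (sd E) a t i' d') /\
    (forall (A C A' S : Ob) (E : ses W A C) (a : Hom A A')
            (t : Hom (smid E) S) (i' : Hom A' S) (d' : Hom S C),
        pushout_seq (si E) (sd E) a t i' d' ->
        exists H : W A' S C i' d',
          pushE A A' C a (cls E) = cls (Ses H)) /\
    (forall (A C C' : Ob) (E : ses W A C) (c : Hom C' C),
        exists (P : Ob) (s : Hom P (smid E)) (d' : Hom P C') (i' : Hom A P),
          pullback_seq (si E) (sd E) c s d' i') /\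
    (forall (A C C' P : Ob) (E : ses W A C) (c : Hom C' C)
            (s : Hom P (smid E)) (d' : Hom P C') (i' : Hom A P),
        pullback_seq (si E) (sd E) c s d' i' ->
        exists H : W A P C' i' d',
          pullE A C C' c (cls E) = cls (Ses H)) /\
    (forall (A C : Ob) (E1 E2 : ses W A C),
        exists (P : Ob) (s : Hom P (bp (smid E1) (smid E2))) (dP : Hom P C)
               (iP : Hom (bp A A) P) (S : Ob) (t : Hom P S) (iS : Hom A S)
               (dS : Hom S C),
          pullback_seq (hsum (si E1) (si E2)) (hsum (sd E1) (sd E2)) (diag C) s dP iP /\
          pushout_seq iP dP (codiag A) t iS dS) /\
    (forall (A C P S : Ob) (E1 E2 : ses W A C)
            (s : Hom P (bp (smid E1) (smid E2))) (dP : Hom P C) (iP : Hom (bp A A) P)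
            (t : Hom P S) (iS : Hom A S) (dS : Hom S C),
        pullback_seq (hsum (si E1) (si E2)) (hsum (sd E1) (sd E2)) (diag C) s dP iP ->
        pushout_seq iP dP (codiag A) t iS dS ->
        exists H : W A S C iS dS,
          addE A C (cls E1) (cls E2) = cls (Ses H)) /\
    (forall A C : Ob, is_abgroup (addE A C) (zeroE A C) (oppE A C)) /\
    (forall (A A' C : Ob) (a : Hom A A') (x y : Ext W C A),
        pushE A A' C a (addE A C x y)
        = addE A' C (pushE A A' C a x) (pushE A A' C a y)) /\
    (forall (A C C' : Ob) (c : Hom C' C) (x y : Ext W C A),
        pullE A C C' c (addE A C x y)
        = addE A C' (pullE A C C' c x) (pullE A C C' c y)) /\
    (forall (A C : Ob) (x : Ext W C A), pushE A A C (idm A) x = x) /\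
    (forall (A A' A'' C : Ob) (a : Hom A A') (b : Hom A' A'') (x : Ext W C A),
        pushE A A'' C (comp b a) x = pushE A' A'' C b (pushE A A' C a x)) /\
    (forall (A C : Ob) (x : Ext W C A), pullE A C C (idm C) x = x) /\
    (forall (A C C' C'' : Ob) (c : Hom C' C) (c' : Hom C'' C') (x : Ext W C A),
        pullE A C C'' (comp c c') x = pullE A C' C'' c' (pullE A C C' c x)) /\
    (forall (A A' C C' : Ob) (a : Hom A A') (c : Hom C' C) (x : Ext W C A),
        pushE A A' C' a (pullE A C C' c x) = pullE A' C C' c (pushE A A' C a x)) /\
    (forall (A A' C : Ob) (a b : Hom A A') (x : Ext W C A),
        pushE A A' C (hadd a b) x = addE A' C (pushE A A' C a x) (pushE A A' C b x)) /\
    (forall (A C C' : Ob) (c e : Hom C' C) (x : Ext W C A),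
        pullE A C C' (hadd c e) x = addE A C' (pullE A C C' c x) (pullE A C C' e x)).
Proof.
  exists pushE, pullE, addE, zeroE, oppE.
  split; [exact push_ex|].
  split.
  { intros A C A' S E a t i' d' HS. exists (push_W HS). rewrite pushE_cls. apply cls_eq.
    apply L1. pose proof HS as [[Hc _] [Ht _]]. exists t. simpl. rewrite comp_id_l.
    split; assumption. }
  split; [exact pull_ex|].
  split.
  { intros A C C' P E c s d' i' HS. exists (pull_W HS). rewrite pullE_cls. apply cls_eq.
    esy. apply L2. pose proof HS as [[Hc _] [Hs _]]. exists s. simpl. rewrite comp_id_r.
    split; assumption. }
  split.
  { intros A C E1 E2. destruct (pull_ex (dsum E1 E2) (diag C)) as [P [s [dP [iP HP]]]].
    destruct (push_ex (Ses (pull_W HP)) (codiag A)) as [S [t [iS [dS HS]]]].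
    exists P, s, dP, iP, S, t, iS, dS. split; [exact HP|exact HS]. }
  split.
  { intros A C P S E1 E2 s dP iP t iS dS HP HS.
    pose proof (pull_W (E:=dsum E1 E2) HP) as H1.
    exists (push_W (E:=Ses H1) HS). rewrite addE_cls. apply cls_eq. unfold sumS.
    etr; [apply push_cong; esy; apply (L2 (F:=Ses H1))|].
    - pose proof HP as [[Hc _] [Hs _]]. exists s. simpl. rewrite comp_id_r. split; assumption.
    - apply L1. pose proof HS as [[Hc _] [Ht _]]. exists t. simpl. rewrite comp_id_l.
      split; assumption. }
  split.
  { intros A C. split; [|split; [|split]].
    - intros x y z. destruct (cls_surj x) as [E1 ->]. destruct (cls_surj y) as [E2 ->].
      destruct (cls_surj z) as [E3 ->]. rewrite !addE_cls. apply cls_eq, sum_assoc.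
    - intros x y. destruct (cls_surj x) as [E1 ->]. destruct (cls_surj y) as [E2 ->].
      rewrite !addE_cls. apply cls_eq, sum_comm.
    - intros x. destruct (cls_surj x) as [E ->]. unfold zeroE at 1. rewrite addE_cls.
      apply cls_eq, sum_zero_r.
    - intros x. destruct (cls_surj x) as [E ->]. rewrite oppE_cls, addE_cls.
      apply cls_eq, sum_opp. }
  split.
  { intros A A' C a x y. destruct (cls_surj x) as [E1 ->]. destruct (cls_surj y) as [E2 ->].
    rewrite addE_cls, !pushE_cls, addE_cls. apply cls_eq, push_sum. }
  split.
  { intros A C C' c x y. destruct (cls_surj x) as [E1 ->]. destruct (cls_surj y) as [E2 ->].
    rewrite addE_cls, !pullE_cls, addE_cls. apply cls_eq, pull_sum. }
  split.
  { intros A C x. destruct (cls_surj x) as [E ->]. rewrite pushE_cls. apply cls_eq, push_id. }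
  split.
  { intros A A' A'' C a b x. destruct (cls_surj x) as [E ->].
    rewrite !pushE_cls. apply cls_eq, push_comp. }
  split.
  { intros A C x. destruct (cls_surj x) as [E ->]. rewrite pullE_cls. apply cls_eq.
    esy; apply pull_id. }
  split.
  { intros A C C' C'' c c' x. destruct (cls_surj x) as [E ->].
    rewrite !pullE_cls. apply cls_eq. esy; apply pull_comp. }
  split.
  { intros A A' C C' a c x. destruct (cls_surj x) as [E ->].
    rewrite pullE_cls, !pushE_cls, pullE_cls. apply cls_eq, push_pull. }
  split.
  { intros A A' C a b x. destruct (cls_surj x) as [E ->].
    rewrite !pushE_cls, addE_cls. apply cls_eq, push_add. }
  { intros A C C' c e x. destruct (cls_surj x) as [E ->].
    rewrite !pullE_cls, addE_cls. apply cls_eq, pull_add. }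
Qed.

End Main.

Theorem mainTheorem7 (X : AddCat) (W : Wclass X) (HW : weakly_exact W) :
  exists (pushE : forall (A A' C : Ob X), Hom A A' -> Ext W C A -> Ext W C A')
         (pullE : forall (A C C' : Ob X), Hom C' C -> Ext W C A -> Ext W C' A)
         (addE : forall (A C : Ob X), Ext W C A -> Ext W C A -> Ext W C A)
         (zeroE : forall (A C : Ob X), Ext W C A)
         (oppE : forall (A C : Ob X), Ext W C A -> Ext W C A),
    (* W(C,a)(E) = aE is well defined: pushouts exist, lie in W, and
       their class depends only on the class of E *)
    (forall (A C A' : Ob X) (E : ses W A C) (a : Hom A A'),
        exists (S : Ob X) (t : Hom (smid E) S) (i' : Hom A' S) (d' : Hom S C),
          pushout_seq (si E) (sd E) a t i' d') /\
    (forall (A C A' S : Ob X) (E : ses W A C) (a : Hom A A')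
            (t : Hom (smid E) S) (i' : Hom A' S) (d' : Hom S C),
        pushout_seq (si E) (sd E) a t i' d' ->
        exists H : W A' S C i' d',
          pushE A A' C a (cls E) = cls (Ses H)) /\
    (* W(c,A)(E) = Ec is well defined *)
    (forall (A C C' : Ob X) (E : ses W A C) (c : Hom C' C),
        exists (P : Ob X) (s : Hom P (smid E)) (d' : Hom P C') (i' : Hom A P),
          pullback_seq (si E) (sd E) c s d' i') /\
    (forall (A C C' P : Ob X) (E : ses W A C) (c : Hom C' C)
            (s : Hom P (smid E)) (d' : Hom P C') (i' : Hom A P),
        pullback_seq (si E) (sd E) c s d' i' ->
        exists H : W A P C' i' d',
          pullE A C C' c (cls E) = cls (Ses H)) /\
    (* the Baer sum E1 + E2 = nabla_A (E1 (+) E2) Delta_C is well defined *)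
    (forall (A C : Ob X) (E1 E2 : ses W A C),
        exists (P : Ob X) (s : Hom P (bp (smid E1) (smid E2))) (dP : Hom P C)
               (iP : Hom (bp A A) P) (S : Ob X) (t : Hom P S) (iS : Hom A S)
               (dS : Hom S C),
          pullback_seq (hsum (si E1) (si E2)) (hsum (sd E1) (sd E2)) (diag C) s dP iP /\
          pushout_seq iP dP (codiag A) t iS dS) /\
    (forall (A C P S : Ob X) (E1 E2 : ses W A C)
            (s : Hom P (bp (smid E1) (smid E2))) (dP : Hom P C) (iP : Hom (bp A A) P)
            (t : Hom P S) (iS : Hom A S) (dS : Hom S C),
        pullback_seq (hsum (si E1) (si E2)) (hsum (sd E1) (sd E2)) (diag C) s dP iP ->
        pushout_seq iP dP (codiag A) t iS dS ->
        exists H : W A S C iS dS,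
          addE A C (cls E1) (cls E2) = cls (Ses H)) /\
    (* each W(C,A) is an abelian group under the Baer sum *)
    (forall A C : Ob X, is_abgroup (addE A C) (zeroE A C) (oppE A C)) /\
    (* W(C,a) and W(c,A) are group homomorphisms *)
    (forall (A A' C : Ob X) (a : Hom A A') (x y : Ext W C A),
        pushE A A' C a (addE A C x y)
        = addE A' C (pushE A A' C a x) (pushE A A' C a y)) /\
    (forall (A C C' : Ob X) (c : Hom C' C) (x y : Ext W C A),
        pullE A C C' c (addE A C x y)
        = addE A C' (pullE A C C' c x) (pullE A C C' c y)) /\
    (* functoriality (covariant in A, contravariant in C) *)
    (forall (A C : Ob X) (x : Ext W C A), pushE A A C (idm A) x = x) /\
    (forall (A A' A'' C : Ob X) (a : Hom A A') (b : Hom A' A'') (x : Ext W C A),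
        pushE A A'' C (comp b a) x = pushE A' A'' C b (pushE A A' C a x)) /\
    (forall (A C : Ob X) (x : Ext W C A), pullE A C C (idm C) x = x) /\
    (forall (A C C' C'' : Ob X) (c : Hom C' C) (c' : Hom C'' C') (x : Ext W C A),
        pullE A C C'' (comp c c') x = pullE A C' C'' c' (pullE A C C' c x)) /\
    (* bifunctoriality: the two actions commute *)
    (forall (A A' C C' : Ob X) (a : Hom A A') (c : Hom C' C) (x : Ext W C A),
        pushE A A' C' a (pullE A C C' c x) = pullE A' C C' c (pushE A A' C a x)) /\
    (* additivity in each variable *)
    (forall (A A' C : Ob X) (a b : Hom A A') (x : Ext W C A),
        pushE A A' C (hadd a b) x = addE A' C (pushE A A' C a x) (pushE A A' C b x)) /\
    (forall (A C C' : Ob X) (c e : Hom C' C) (x : Ext W C A),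
        pullE A C C' (hadd c e) x = addE A C' (pullE A C C' c x) (pullE A C C' e x)).
Proof. exact (main_in HW). Qed.
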